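(* In the setting below, as $\mathcal{O}$-modules $\operatorname{coker}(\lambda_P(\mathbf{J}))\cong\mathcal{O}^{mn-(n-t)}\oplus T$, where $T$ is the torsion submodule, and $\operatorname{length}_{\mathcal{O}}T = (n-t)\,w_{\mathbf{a}}$.
   Context: Let $\mathcal{O}$ be a discrete valuation ring with uniformiser $\varpi$ and normalised valuation $\nu$. Let $2\le m\le n$, $t=m-1$, $P=\mathcal{O}[X_{m\times n}]$, $X_{[a,b]}$ the submatrix of columns $a$ through $b$ of the $m\times n$ matrix of indeterminates $X$, and $f_k=\det X_{[k,k+t]}$ for $1\le k\le n-t$. $\mathbf{J}$ is the $mn\times(n-t)$ Jacobian matrix with entries $\partial f_k/\partial X_{ij}$ (rows indexed by variables). Fix integers $0\le a_1\le\cdots\le a_t$, $D=\operatorname{diag}(\varpi^{a_1},\ldots,\varpi^{a_t})$, $\Delta=\det D$. Let $\mathbf{a}\in\mathcal{O}^{m\times n}$ have zero last row and top $t$ entries of column $j$ equal to the $r$-th column of $D$, where $1\le r\le t$, $r\equiv j\pmod t$. $\lambda_P\colon P\to\mathcal{O}$ is $X_{ij}\mapsto\mathbf{a}_{ij}$, and $\lambda_P(\mathbf{J})\colon\mathcal{O}^{n-t}\to\mathcal{O}^{mn}$ is the entrywise evaluated matrix. $w_{\mathbf{a}} = \nu(\Delta) = \operatorname{length}_{\mathcal{O}}(\mathcal{O}/\mathrm{I}_t(\mathbf{a}))$. *)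

(* Defs.v *)
From HB Require Import structures.
From mathcomp Require Import all_boot all_order all_algebra.
From mathcomp Require Import mpoly.
Set Implicit Arguments. Unset Strict Implicit. Unset Printing Implicit Defensive.
Import Order.TTheory GRing.Theory.
Local Open Scope ring_scope.

(* O is a discrete valuation ring with uniformiser pi and normalised
   valuation nu : every nonzero x is (unit) * pi^(nu x), pi is a nonzero
   non-unit.  (nu 0 is irrelevant; it is never used below at 0.) *)
Definition is_DVR (O : idomainType) (pi : O) (nu : O -> nat) : Prop :=
  [/\ pi != 0, pi \isn't a GRing.unit &
      forall x : O, x != 0 ->
        exists2 u : O, u \is a GRing.unit & x = u * pi ^+ nu x].

(* Variables of P = O[X_{m x n}] : X_{ij} (0-indexed) is 'X_(i*n+j). *)
Definition xvar (O : comNzRingType) (m n : nat) (i j : nat) : {mpoly O[m * n]} :=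
  if (insub (i * n + j) : option 'I_(m * n)) is Some v then 'X_v else 0.

(* f_k = det X_[k, k+t] (0-indexed k < n - t, t = m - 1): the m x m minor
   on the consecutive columns k, ..., k + m - 1. *)
Definition fmin (O : comNzRingType) (m n : nat) (k : nat) : {mpoly O[m * n]} :=
  \det (\matrix_(i < m, c < m) xvar O m n i (k + c)).

Definition jacobian (O : comNzRingType) (m n : nat) :
    'M[{mpoly O[m * n]}]_(m * n, n - (m - 1)) :=
  \matrix_(v < m * n, k < n - (m - 1)) mderiv v (fmin O m n k).

(* The point a (0-indexed entries): the last row is zero and the top t
   entries of column j are the r-th column of D = diag(pi^(e 0),...,pi^(e (t-1))),
   where r = j mod t; i.e. a_{ij} = pi^(e i) if i = j mod t (< t), else 0. *)
Definition apt (O : comNzRingType) (m n : nat) (pi : O) (e : nat -> nat)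
    (i j : nat) : O :=
  if (i < m - 1)%N && (i == j %% (m - 1))%N then pi ^+ e i else 0.

Definition lampt (O : comNzRingType) (m n : nat) (pi : O) (e : nat -> nat) :
    'I_(m * n) -> O :=
  fun v => @apt O m n pi e (v %/ n)%N (v %% n)%N.

Definition evJ (O : comNzRingType) (m n : nat) (pi : O) (e : nat -> nat) :
    'M[O]_(m * n, n - (m - 1)) :=
  map_mx (meval (@lampt O m n pi e)) (jacobian O m n).

(* Isomorphism of O-modules coker A ~= coker B, A : O^q -> O^p, B : O^q' -> O^p'
   (cokernels of matrices acting on column vectors).  Any O-linear map between
   finitely presented cokernels lifts to a matrix between the free covers, so
   this is exactly: there are mutually inverse O-linear maps of the cokernels. *)
Definition coker_iso (R : comNzRingType) (p q p' q' : nat)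
    (A : 'M[R]_(p, q)) (B : 'M[R]_(p', q')) : Prop :=
  exists (F : 'M[R]_(p', p)) (G : 'M[R]_(p, p')),
    [/\ exists X : 'M[R]_(q', q), F *m A = B *m X,
        exists Y : 'M[R]_(q, q'), G *m B = A *m Y,
        exists Z : 'M[R]_(q, p), G *m F - 1%:M = A *m Z &
        exists W : 'M[R]_(q', p'), F *m G - 1%:M = B *m W].

(* The presentation matrix p x q (q <= p) with diagonal pi^(d k), k < q, zero
   elsewhere: its cokernel is O^(p-q) (+) (+)_{k<q} O/(pi^(d k)), whose torsion
   submodule is T = (+)_{k<q} O/(pi^(d k)), of O-length sum_k d k. *)
Definition free_plus_torsion (R : comNzRingType) (pi : R) (p q : nat)
    (d : 'I_q -> nat) : 'M[R]_(p, q) :=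
  \matrix_(i < p, k < q) if (i == k :> nat) then pi ^+ d k else 0.

(* Main.v *)
Require Import Defs.
From HB Require Import structures.
From mathcomp Require Import all_boot all_order all_algebra all_fingroup.
From mathcomp Require Import mpoly zify.
Import GRing.Theory.
Local Open Scope ring_scope.
Lemma dX (R : comNzRingType) N (a : 'I_N -> R) (v w : 'I_N) :
  meval a (mderiv v 'X_w) = (w == v)%:R.
Proof.
rewrite mderivX mevalZ mnm1E.
case: eqVneq => [->|_]; last by rewrite mul0r.
rewrite mevalX mul1r; apply: big1 => i _.
rewrite mnmBE !mnm1E subnn expr0 //.
Qed.
Lemma dprod (R : comNzRingType) N (a : 'I_N -> R) (v : 'I_N) k
  (F : 'I_k -> {mpoly R[N]}) :
  meval a (mderiv v (\prod_(i < k) F i)) =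
  \sum_(j < k) meval a (mderiv v (F j)) * \prod_(i < k | i != j) meval a (F i).
Proof.
elim: k F => [|k IH] F.
  by rewrite !big_ord0 -mpolyC1 mderivC meval0.
rewrite big_ord_recl mderivM mevalD !mevalM IH big_ord_recl.
rewrite (big_mkcond (fun i => i != ord0)) big_ord_recl eqxx /= mul1r rmorph_prod.
rewrite mulr_sumr; congr (_ * _ + _).
apply: eq_bigr => j _; rewrite (big_mkcond (fun i => i != lift ord0 j)) big_ord_recl.
rewrite /= mulrCA; congr (_ * (_ * _)).
rewrite [LHS]big_mkcond; apply: eq_bigr => i _.
by rewrite (inj_eq (@lift_inj _ ord0)).
Qed.
Definition cc (t k i : nat) : nat :=
  let r := ((i + t - k %% t) %% t)%N in if r == 0%N then t else r.

Lemma cc_range t k i : (0 < t)%N -> (0 < cc t k i <= t)%N.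
Proof.
move=> t0; rewrite /cc; case: eqP => [_|]; first by rewrite t0 leqnn.
move=> /eqP; rewrite -lt0n => ->; exact/ltnW/ltn_pmod.
Qed.

Lemma mod_small_t t x : (0 < x <= t)%N -> (x %% t = if x == t then 0 else x)%N.
Proof.
move=> /andP[x0 xt]; case: eqP => [->|/eqP ne]; first by rewrite modnn.
by rewrite modn_small // ltn_neqAle ne.
Qed.

Lemma cc_mod t k i : (0 < t)%N -> (i < t)%N -> ((k + cc t k i) %% t = i)%N.
Proof.
move=> t0 it; rewrite -modnDmr.
have -> : (cc t k i %% t = (i + t - k %% t) %% t)%N.
  rewrite /cc; case: eqP => [->|_]; first by rewrite modnn.
  by rewrite modn_mod.
rewrite modnDmr -modnDml.
have kt : (k %% t < t)%N by rewrite ltn_pmod.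
have -> : (k %% t + (i + t - k %% t) = i + t)%N by lia.
by rewrite modnDr modn_small.
Qed.

Lemma cc_uniq t k x y : (0 < x <= t)%N -> (0 < y <= t)%N ->
  ((k + x) %% t = (k + y) %% t)%N -> x = y.
Proof.
move=> hx hy /eqP; rewrite eqn_modDl => /eqP.
rewrite (@mod_small_t t x hx) (@mod_small_t t y hy).
move: hx hy; do 2 case: eqP; lia.
Qed.

Definition gfun (t k : nat) (i : 'I_t.+1) : 'I_t.+1 :=
  inord (if i == t :> nat then 0%N else cc t k i).

Lemma gfun_val t k (i : 'I_t.+1) : (0 < t)%N ->
  gfun t k i = (if i == t :> nat then 0%N else cc t k i) :> nat.
Proof.
move=> t0; rewrite /gfun inordK //; case: eqP => // _.
by have /andP[_ ?] := cc_range t k i t0; rewrite ltnS.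
Qed.

Lemma gfun_inj t k : (0 < t)%N -> injective (gfun t k).
Proof.
move=> t0 i j /(congr1 val) /=; rewrite !gfun_val //.
have hi := cc_range t k i t0; have hj := cc_range t k j t0.
have := ltn_ord i; have := ltn_ord j.
case: eqP => [ei|ni]; case: eqP => [ej|nj] => ? ? E; apply: val_inj => /=.
- by rewrite ei ej.
- lia.
- lia.
have it : (i < t)%N by lia.
have jt : (j < t)%N by lia.
by rewrite -(@cc_mod t k i t0 it) -(@cc_mod t k j t0 jt) E.
Qed.

Definition s0 t k (t0 : (0 < t)%N) : {perm 'I_t.+1} := perm (@gfun_inj t k t0).

Definition bb (R : nzRingType) (t i j : nat) : R := (i == j %% t)%N%:R.

Definition Mv (R : comNzRingType) (t n v k : nat) : R :=
  \sum_(s : {perm 'I_t.+1}) (-1) ^+ s * ((v == t * n + k + s ord_max)%N%:R *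
     \prod_(i < t) bb R t i (k + s (widen_ord (leqnSn t) i))).

Lemma Mv_low (R : comNzRingType) t n v k : (v < t * n + k)%N -> Mv R t n v k = 0.
Proof.
move=> vl; apply: big1 => s _.
have -> : (v == t * n + k + s ord_max)%N = false by apply/negbTE; lia.
by rewrite mul0r mulr0.
Qed.

Lemma Mv_other (R : comNzRingType) t n k (t0 : (0 < t)%N) (s : {perm 'I_t.+1}) :
  s != s0 t k t0 ->
  (-1) ^+ s * ((t * n + k == t * n + k + s ord_max)%N%:R *
     \prod_(i < t) bb R t i (k + s (widen_ord (leqnSn t) i))) = 0 :> R.
Proof.
move=> ns.
case: (boolP (s ord_max == ord0)) => [/eqP sm|sm]; last first.
  have -> : (t * n + k == t * n + k + s ord_max)%N = false.
    by apply/negbTE; move: sm; rewrite -val_eqE /=; lia.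
  by rewrite mul0r mulr0.
case: (boolP [forall i : 'I_t, ((i : nat) == (k + s (widen_ord (leqnSn t) i)) %% t)%N]) => [/forallP all|].
  exfalso; move/eqP: ns; apply; apply/permP => i; rewrite permE.
  apply: val_inj => /=; rewrite gfun_val //.
  case: eqP => [im|inm].
    have -> : i = ord_max by apply: val_inj.
    by rewrite sm.
  have it : (i < t)%N by have := ltn_ord i; lia.
  have := all (Ordinal it); rewrite /= => /eqP hi.
  have wi : widen_ord (leqnSn t) (Ordinal it) = i by apply: val_inj.
  rewrite wi in hi.
  apply: (@cc_uniq t k); last by rewrite cc_mod.
  - apply/andP; split; last by rewrite -ltnS.
    rewrite lt0n; apply/negP => /eqP s0'.
    have : s i = s ord_max by apply: val_inj => /=; rewrite sm s0'.
    by move/perm_inj => ie; apply: inm; rewrite ie.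
  - exact: cc_range.
rewrite negb_forall => /existsP[i /negbTE hi].
by rewrite (bigD1 i) //= /bb hi mul0r !mulr0.
Qed.

Lemma Mv_unit (R : comUnitRingType) t n k : (0 < t)%N ->
  Mv R t n (t * n + k) k \is a GRing.unit.
Proof.
move=> t0; rewrite /Mv (bigD1 (s0 t k t0)) //=.
rewrite [X in _ + X]big1 ?addr0; last by move=> s ns; apply: Mv_other.
rewrite permE gfun_val // eqxx addn0 eqxx mul1r.
rewrite big1 ?mulr1; first by rewrite unitrX // unitrN1.
move=> i _; rewrite permE gfun_val //= ltn_eqF // /bb cc_mod // eqxx //.
Qed.

Lemma xvar_spec (O : comNzRingType) m n i j : (i < m)%N -> (j < n)%N ->
  {w : 'I_(m * n) | val w = (i * n + j)%N & @xvar O m n i j = 'X_w}.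
Proof.
move=> im jn; rewrite /xvar; case: insubP => [w _ vw|].
  by exists w.
by move/negP; case; have : (i * n + j < m * n)%N by nia.
Qed.

Lemma lampt_val (O : comNzRingType) m n pi e (w : 'I_(m * n)) i j :
  (j < n)%N -> val w = (i * n + j)%N -> lampt pi e w = @apt O m n pi e i j.
Proof.
move=> jn vw; rewrite /lampt vw.
have n0 : (0 < n)%N by lia.
by rewrite divnMDl // divn_small // addn0 modnMDl modn_small.
Qed.

Lemma apt_last (O : comNzRingType) t n pi e j : @apt O t.+1 n pi e t j = 0.
Proof. by rewrite /apt subSS subn0 ltnn. Qed.

Lemma apt_low (O : comNzRingType) t n pi e i j : (i < t)%N ->
  @apt O t.+1 n pi e i j = bb O t i j * pi ^+ e i.
Proof.
by move=> it; rewrite /apt subSS subn0 it /bb; case: eqP; rewrite ?mul1r ?mul0r.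
Qed.

Lemma sign_deriv (R : comNzRingType) N (a : 'I_N -> R) (v : 'I_N) (b : bool) p :
  meval a (mderiv v ((-1) ^+ b * p)) = (-1) ^+ b * meval a (mderiv v p).
Proof. by case: b; rewrite ?expr0 ?expr1 ?mul1r ?mulN1r ?mderivN ?mevalN. Qed.

Lemma ev_xvar (O : comNzRingType) (pi : O) e t n i j : (i < t.+1)%N -> (j < n)%N ->
  meval (@lampt O t.+1 n pi e) (@xvar O t.+1 n i j) = @apt O t.+1 n pi e i j.
Proof.
move=> it jn; have [w vw ->] := @xvar_spec O t.+1 n i j it jn.
by rewrite mevalXU (@lampt_val O t.+1 n pi e w i j jn vw).
Qed.

Lemma dv_xvar (O : comNzRingType) (pi : O) e t n (v : 'I_(t.+1 * n)) i j :
  (i < t.+1)%N -> (j < n)%N ->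
  meval (@lampt O t.+1 n pi e) (mderiv v (@xvar O t.+1 n i j)) =
  (v == (i * n + j)%N :> nat)%:R.
Proof.
move=> it jn; have [w vw ->] := @xvar_spec O t.+1 n i j it jn.
rewrite dX -val_eqE vw eq_sym //.

Qed.

Lemma evJ_eq (O : comNzRingType) (pi : O) (e : nat -> nat) t n (v : 'I_(t.+1 * n))
  (k : 'I_(n - (t.+1 - 1))) : (t.+1 <= n)%N ->
  @evJ O t.+1 n pi e v k = (\prod_(i < t) pi ^+ e i) * Mv O t n v k.
Proof.
move=> tn.
have kn : (k + t < n)%N by have := ltn_ord k; lia.
rewrite /evJ /jacobian !mxE /fmin; unfold determinant. rewrite (raddf_sum (mderiv v)) (raddf_sum (meval _)).
rewrite /Mv mulr_sumr; apply: eq_bigr => s _.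
etransitivity; first exact: sign_deriv. rewrite mulrCA; congr (_ * _).
rewrite dprod big_ord_recr /= big1 ?add0r; last first.
  move=> j _; rewrite (bigD1 ord_max) /=; last by rewrite -val_eqE /= neq_ltn ltn_ord orbT.
  by rewrite !mxE ev_xvar // ?apt_last ?mul0r ?mulr0 //; have := ltn_ord (s ord_max); lia.
rewrite !mxE dv_xvar //; last by have := ltn_ord (s ord_max); lia.
rewrite (big_mkcond (fun i => i != ord_max)) big_ord_recr /= eqxx mulr1.
rewrite addnA mulrCA; congr (_ * _).
rewrite -big_split /=; apply: eq_bigr => i _.
have -> : (widen_ord (leqnSn t) i != ord_max) by rewrite -val_eqE /= neq_ltn ltn_ord.
rewrite mxE ev_xvar //=; last by have := ltn_ord (s (widen_ord (leqnSn t) i)); lia.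
  by rewrite apt_low // mulrC.
by have := ltn_ord i; lia.
Qed.


Lemma coker_of_eq (R : comUnitRingType) p q (A : 'M[R]_(p, q)) (B : 'M[R]_(p, q))
  (U : 'M_p) (V : 'M_q) : U \in unitmx -> V \in unitmx ->
  A = U *m B *m V -> coker_iso A B.
Proof.
move=> Uu Vu ->; exists (invmx U), U; split.
- by exists V; rewrite -mulmxA mulKmx.
- by exists (invmx V); rewrite -!mulmxA mulmxV // mulmx1.
- by exists 0; rewrite mulmxV // subrr mulmx0.
- by exists 0; rewrite mulVmx // subrr mulmx0.
Qed.

Definition rhof N n (i : 'I_N) : 'I_N :=
  Ordinal (ltn_pmod (i + n) (leq_ltn_trans (leq0n i) (ltn_ord i))).

Lemma rhof_inj N n : injective (@rhof N n).
Proof.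
move=> i j /(congr1 val) /= /eqP; rewrite eqn_modDr !modn_small // => /eqP.
exact: val_inj.
Qed.

Definition rho N n : {perm 'I_N} := perm (@rhof_inj N n).

Lemma rho_eq t n (j : 'I_(t.+1 * n)) k : (k < n)%N ->
  (rho _ n j == k :> nat) = (j == t * n + k :> nat).
Proof.
move=> kn; rewrite permE /=.
have jN := ltn_ord j.
have NE : (t.+1 * n = n + t * n)%N by rewrite mulSn.
case: (ltnP j (t * n)) => jl.
  rewrite modn_small; last by lia.
  by apply/idP/idP => /eqP; lia.
have -> : (j + n = (j - t * n) + t.+1 * n)%N by lia.
rewrite modnDr modn_small; last by lia.
by apply/idP/idP => /eqP; lia.
Qed.

Lemma main_mx (R : comUnitRingType) t n (pi D w : R) (nu : nat)
  (A : 'M[R]_(t.+1 * n, n - (t.+1 - 1))) : (0 < t)%N -> (t.+1 <= n)%N ->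
  w \is a GRing.unit -> D = w * pi ^+ nu ->
  (forall v k, A v k = D * Mv R t n v k) ->
  coker_iso A (@free_plus_torsion R pi (t.+1 * n) (n - (t.+1 - 1)) (fun _ => nu)).
Proof.
move=> t0 tn wu Dw AE.
set N := (t.+1 * n)%N; set E := (n - (t.+1 - 1))%N.
pose C : 'M[R]_N := \matrix_(i, j)
  if (t * n <= j < t * n + E)%N then Mv R t n i (j - t * n) else (i == j)%:R.
apply: (@coker_of_eq _ _ _ _ _ (C *m perm_mx (rho N n)) (w%:M)).
- rewrite unitmx_mul unitmx_perm andbT unitmxE det_trig.
    apply: unitr_prod => j _; rewrite mxE; case: ifP => [/andP[j1 j2]|_].
      have -> : (j : nat) = (t * n + (j - t * n))%N by lia.
      by rewrite addKn; apply: Mv_unit.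
    by rewrite eqxx unitr1.
  apply/is_trig_mxP => i j ij; rewrite mxE; case: ifP => [/andP[j1 j2]|_].
    by apply: Mv_low; lia.
  by rewrite -val_eqE /= (ltn_eqF ij).
- by rewrite unitmxE det_scalar unitrX.
apply/matrixP => v k; rewrite mul_mx_scalar mxE -mulmxA -row_permE AE mxE.
have kE := ltn_ord k.
have j0lt : (t * n + k < N)%N by rewrite /N mulSn; lia.
rewrite (bigD1 (Ordinal j0lt)) //= big1 ?addr0; last first.
  move=> j nj; rewrite !mxE rho_eq; last by lia.
  by rewrite -val_eqE /= in nj; rewrite (negbTE nj) mulr0.
rewrite !mxE rho_eq; last by lia.
rewrite eqxx /=.
have -> : (t * n <= t * n + k < t * n + E)%N by lia.
by rewrite addKn Dw -mulrA [pi ^+ nu * _]mulrC.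
Qed.

Theorem corollary5p7 (O : idomainType) (pi : O) (nu : O -> nat)
    (m n : nat) (e : nat -> nat) :
  is_DVR pi nu ->
  (2 <= m)%N -> (m <= n)%N ->
  (forall i j : nat, (i <= j)%N -> (j < m - 1)%N -> (e i <= e j)%N) ->
  exists d : 'I_(n - (m - 1))%N -> nat,
    coker_iso (@evJ O m n pi e)
      (@free_plus_torsion O pi (m * n)%N (n - (m - 1))%N d) /\
    (\sum_(k < (n - (m - 1))%N) d k)%N
      = ((n - (m - 1))%N * nu (\prod_(i < (m - 1)%N) pi ^+ e i)%R)%N.
Proof.
case: m => [|t] //; move=> [pi0 _ hdvr] m2 tn _.
have t0 : (0 < t)%N by lia.
set D := (\prod_(i < (t.+1 - 1)%N) pi ^+ e i).
have D0 : D != 0 by apply/prodf_neq0 => i _; rewrite expf_neq0.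
have [w wu Dw] := hdvr D D0.
exists (fun _ => nu D); split; last by rewrite sum_nat_const card_ord.
apply: (@main_mx O t n pi D w (nu D)) => // v k.
rewrite evJ_eq // /D; congr (_ * _).
by rewrite subSS subn0.
Qed.
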